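(* For any regulatory network $\mathbf{RN}$, the geometric parameter graph $\mathsf{GPG}$ is connected.
   Context: Regulatory network: $\mathbf{RN}=(V,E)$, $V=\{1,\dots,N\}$. Each edge is an ordered pair $(i,j)$ annotated as an activation $i\to j$ or a repression $i\dashv j$. There is at most one edge per ordered pair, and there is no $i\dashv i$. Set $\mathbf S(n)=\{i:(i,n)\in E\}$ and $\mathbf T(n)=\{j:(n,j)\in E\}$. Each node $j$ carries a logical AND/OR expression (no negations) using each variable of $\mathbf S(j)$ exactly once. $M_j$ is the polynomial obtained by AND $\mapsto$ product and OR $\mapsto$ sum. Parameters: $z=(l,u,\theta,\gamma)\in\mathbb R^D$, $D=N+3\#E$, consisting of $l_{j,i},u_{j,i},\theta_{j,i}$ for each edge $(i,j)$ and $\gamma_i$ for each node. Set $\bar Z=\{z\in[0,\infty)^D: l_{j,i}\le u_{j,i}\}$. Switching nonlinearity: $\sigma_{j,i}(x)=l_{j,i}$ if ($i\to j$, $x_i<\theta_{j,i}$) or ($i\dashv j$, $x_i>\theta_{j,i}$). It equals $u_{j,i}$ if ($i\to j$, $x_i>\theta_{j,i}$) or ($i\dashv j$, $x_i<\theta_{j,i}$). Set $\Lambda_j(x)=M_j((\sigma_{j,i}(x))_{i\in\mathbf S(j)})$. Fundamental cells: with $\theta_{-\infty,i}=0$ and $\theta_{\infty,i}=\infty$, a fundamental cell is $\kappa=\prod_i(\theta_{a_i,i},\theta_{b_i,i})$ with consecutive thresholds among $\{\theta_{j,i}:j\in\mathbf T(i)\cup\{\pm\infty\}\}$. $\Lambda(\kappa)$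 is the constant value of $\Lambda$ on $\kappa$. $\theta_{j,i}$ defines a face of $\kappa$ if $j\in\{a_i,b_i\}\cap V$. Regular parameters: $z$ is regular ($z\in Z$) if - $0<l_{j,i}<u_{j,i}$, $\gamma_i>0$ and $\theta_{j,i}>0$; - the thresholds $\theta_{j,i}$, $j\in\mathbf T(i)$, are distinct for each $i$; - $\Lambda_i(\kappa)\neq\gamma_i\theta_{j,i}$ whenever $\theta_{j,i}$ defines a face of $\kappa$. The relevant equalities are - $l_{j,i}=u_{j,i}$, $\gamma_i=0$, $\theta_{j,i}=0$, $l_{j,i}=0$, $u_{j,i}=0$; - $\theta_{j,i}=\theta_{j',i}$ ($j\ne j'\in\mathbf T(i)$); - $\gamma_i\theta_{j,i}=\Lambda_i(\kappa)$ with $\theta_{j,i}$ defining a face of $\kappa$. A point of $\bar Z$ is $1$-deficient if exactly one of these holds. $\mathsf{GPG}$: its vertices are the connected components of $Z$. Two components are adjacent if the intersection of their closures in $\bar Z$ contains a $1$-deficient point. *)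

(* Defs.v *)
From HB Require Import structures.
From mathcomp Require Import all_boot all_order all_algebra.
From mathcomp Require Import all_classical all_reals all_analysis.
From Stdlib Require Import Relation_Operators.

Set Implicit Arguments.
Unset Strict Implicit.
Unset Printing Implicit Defensive.

Import Order.TTheory GRing.Theory Num.Theory.
Import numFieldNormedType.Exports.
Local Open Scope classical_set_scope.
Local Open Scope ring_scope.

Inductive lexpr (n : nat) : Type :=
  | LVar of 'I_n
  | LAnd of lexpr n & lexpr n
  | LOr of lexpr n & lexpr n.

Fixpoint leaves n (e : lexpr n) : seq 'I_n :=
  match e with
  | LVar i => [:: i]
  | LAnd a b => leaves a ++ leaves b
  | LOr a b => leaves a ++ leaves b
  end.

Fixpoint meval (R : pzRingType) n (v : 'I_n -> R) (e : lexpr n) : R :=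
  match e with
  | LVar i => v i
  | LAnd a b => meval v a * meval v b
  | LOr a b => meval v a + meval v b
  end.

Section GPG.
Variables (R : realType) (N : nat).
(* sgn i j = Some true  : activation  i -> j
   sgn i j = Some false : repression  i -| j
   sgn i j = None       : (i,j) is not an edge *)
Variable sgn : 'I_N -> 'I_N -> option bool.
(* M j : the logic of node j (None is used only when S(j) is empty) *)
Variable M : 'I_N -> option (lexpr N).

Definition is_edge (i j : 'I_N) : bool := sgn i j != None.

Definition src_set (n : 'I_N) : {set 'I_N} := [set i | is_edge i n].
Definition tgt_set (n : 'I_N) : {set 'I_N} := [set j | is_edge n j].

Definition wf_network : Prop :=
  (forall i, sgn i i <> Some false) /\
  (forall j, match M j with
             | None => src_set j = finset.set0
             | Some e => perm_eq (leaves e) (enum (src_set j)) = true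
             end).

Definition edge := {p : 'I_N * 'I_N | is_edge p.1 p.2}.
Definition esrc (e : edge) : 'I_N := (val e).1.
Definition etgt (e : edge) : 'I_N := (val e).2.
Definition is_act (e : edge) : bool := sgn (esrc e) (etgt e) == Some true.

(* parameter coordinates: gamma_i for each node, and (l,u,theta) for each
   edge; D = N + 3 #E *)
Definition pidx := ('I_N + (edge * 'I_3))%type.
Local Notation param := {ptws pidx -> R}.

(* for an edge e = (i,j):  l e = l_{j,i}, u e = u_{j,i}, th e = theta_{j,i} *)
Definition pl (z : param) (e : edge) : R := z (inr (e, 0%R)).
Definition pu (z : param) (e : edge) : R := z (inr (e, 1%R)).
Definition pth (z : param) (e : edge) : R := z (inr (e, 2%R)).
Definition pg (z : param) (i : 'I_N) : R := z (inl i).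

Definition sig_val (z : param) (e : edge) (above : bool) : R :=
  if above == is_act e then pu z e else pl z e.

(* sigma_{j,i}(x) (meaningful for x_i <> theta_{j,i}) *)
Definition sigma (z : param) (e : edge) (x : 'I_N -> R) : R :=
  sig_val z e (pth z e < x (esrc e)).

Definition edge_of (i j : 'I_N) : option edge := insub (i, j).

Definition pattern (z : param) (n : 'I_N) (x : 'I_N -> R) : {ffun 'I_N -> bool} :=
  [ffun k => if edge_of k n is Some e then pth z e < x k else false].

Definition Lambda_p (z : param) (n : 'I_N) (p : {ffun 'I_N -> bool}) : R :=
  match M n with
  | None => 0
  | Some t => meval (fun k => if edge_of k n is Some e then sig_val z e (p k)
                              else 0) t
  end.

Definition Lambda (z : param) (n : 'I_N) (x : 'I_N -> R) : R :=
  Lambda_p z n (pattern z n x).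

(* x lies in (the interior of) some fundamental cell: x in (0,oo)^N and
   x_k differs from every threshold theta_{j,k} *)
Definition cellpt (z : param) (x : 'I_N -> R) : Prop :=
  (forall k, 0 < x k) /\ (forall e : edge, x (esrc e) <> pth z e).

(* theta_{j,i} (e = (i,j)) defines a face of the fundamental cell containing x:
   it is one of the two consecutive thresholds bounding x_i *)
Definition face (z : param) (e : edge) (x : 'I_N -> R) : Prop :=
  x (esrc e) <> pth z e /\
  forall e' : edge, esrc e' = esrc e ->
    ~ (Num.min (x (esrc e)) (pth z e) < pth z e' <
       Num.max (x (esrc e)) (pth z e)).

Definition Zbar : set param :=
  [set z | (forall e, 0 <= pl z e /\ 0 <= pu z e /\ 0 <= pth z e /\
                      pl z e <= pu z e) /\ (forall i, 0 <= pg z i)].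

Definition Zreg : set param :=
  [set z |
    (forall e, 0 < pl z e /\ pl z e < pu z e /\ 0 < pth z e) /\
    (forall i, 0 < pg z i) /\
    (forall e e' : edge, esrc e = esrc e' -> e <> e' -> pth z e <> pth z e') /\
    (forall (e : edge) x, cellpt z x -> face z e x ->
        Lambda z (esrc e) x <> pg z (esrc e) * pth z e)].

Inductive eq_label : Type :=
  | EqLU of edge
  | EqL0 of edge
  | EqU0 of edge
  | EqTh0 of edge
  | EqG0 of 'I_N
  | EqThTh of edge & edge
  | EqFace of edge & {ffun 'I_N -> bool}.
      (* gamma_i theta_{j,i} = Lambda_i(kappa), theta_{j,i} face of kappa,
         where kappa has sigma-pattern p on S(i) *)

Definition eq_holds (z : param) (a : eq_label) : Prop :=
  match a with
  | EqLU e => pl z e = pu z e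
  | EqL0 e => pl z e = 0
  | EqU0 e => pu z e = 0
  | EqTh0 e => pth z e = 0
  | EqG0 i => pg z i = 0
  | EqThTh e e' => esrc e = esrc e' /\ (etgt e < etgt e')%N /\ pth z e = pth z e'
  | EqFace e p =>
      (exists x, cellpt z x /\ face z e x /\ pattern z (esrc e) x = p) /\
      pg z (esrc e) * pth z e = Lambda_p z (esrc e) p
  end.

Definition one_deficient (z : param) : Prop :=
  Zbar z /\ exists a, eq_holds z a /\ forall b, eq_holds z b -> b = a.

Definition gpg_vertex (C : set param) : Prop :=
  exists2 z, Zreg z & C = connected_component Zreg z.

Definition gpg_adj (C1 C2 : set param) : Prop :=
  gpg_vertex C1 /\ gpg_vertex C2 /\
  exists z, (closure C1 `&` Zbar) z /\ (closure C2 `&` Zbar) z /\ one_deficient z.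

Definition gpg_connected : Prop :=
  forall C1 C2, gpg_vertex C1 -> gpg_vertex C2 -> clos_refl_trans _ gpg_adj C1 C2.

End GPG.

(* Main.v *)
Require Import Defs.
From HB Require Import structures.
From mathcomp Require Import all_boot all_order all_algebra.
From mathcomp Require Import all_classical all_reals all_analysis.
From Stdlib Require Import Relation_Operators.
From mathcomp Require Import ring lra.
Import Order.TTheory GRing.Theory Num.Theory.
Import numFieldNormedType.Exports.
Local Open Scope classical_set_scope.
Local Open Scope ring_scope.

Set Implicit Arguments.
Unset Strict Implicit.
Unset Printing Implicit Defensive.


Lemma ptws_cont (R : realType) (T : topologicalType) (I : Type) (g : T -> {ptws I -> R}) :
  (forall i, continuous (fun t => g t i)) -> continuous g.
Proof.
move=> H x; apply/cvg_sup => i A /=.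
rewrite (@nbhsE (initial_topology (fun f : I -> R => f i))).
move=> [B [[C oC <-] Cx] BA].
apply: (filterS (fun t (Ht : C (g t i)) => BA (g t) Ht)).
apply: (H i x); exact: open_nbhs_nbhs.
Qed.

Section L1.
Variables (R : realType) (T : topologicalType).
Variable (g : R -> T).
Hypothesis cg : continuous g.

Lemma comp_path (Zs : set T) (E : set R) a b :
  is_interval E -> E a -> E b -> (forall t, E t -> Zs (g t)) ->
  connected_component Zs (g a) = connected_component Zs (g b).
Proof.
move=> iE Ea Eb HZ.
have cE : connected (g @` E).
  apply: connected_continuous_connected; first exact/connected_intervalP.
  exact: continuous_subspaceT.
have sub : g @` E `<=` connected_component Zs (g a).
  apply: connected_component_max => //.
  by move=> y [t Et <-]; apply: HZ.
apply: same_connected_component; apply: sub; by exists b.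
Qed.

Lemma closure_left (C : set T) a s :
  a < s -> (forall t, a <= t < s -> C (g t)) -> closure C (g s).
Proof.
move=> las HC B nB.
have : nbhs s (g @^-1` B) by apply: cg.
move=> /nbhs_ballP [e /= e0 He].
pose t := Num.max a (s - e / 2).
have ht : a <= t < s.
  rewrite le_max lexx /= gt_max las /=.
  by rewrite ltrBlDr ltrDl divr_gt0.
exists (g t); split; first exact: HC.
apply: He; rewrite -ball_normE /ball_ /=.
have -> : `|s - t| = s - t by rewrite ger0_norm // subr_ge0; case/andP: ht => _ /ltW.
rewrite ltrBlDr -ltrBlDl /t.
apply: (@lt_le_trans _ _ (s - e / 2)); last by rewrite le_max lexx orbT.
by rewrite ltrD2l ltrN2 ltr_pdivrMr // ltr_pMr // ltr1n.
Qed.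

Lemma closure_right (C : set T) s b :
  s < b -> (forall t, s < t <= b -> C (g t)) -> closure C (g s).
Proof.
move=> lsb HC B nB.
have : nbhs s (g @^-1` B) by apply: cg.
move=> /nbhs_ballP [e /= e0 He].
pose t := Num.min b (s + e / 2).
have ht : s < t <= b.
  rewrite lt_min lsb /= ge_min lexx /=.
  by rewrite ltrDl divr_gt0.
exists (g t); split; first exact: HC.
apply: He; rewrite -ball_normE /ball_ /=.
have -> : `|s - t| = t - s.
  by rewrite distrC ger0_norm // subr_ge0; case/andP: ht => /ltW.
rewrite ltrBlDr.
apply: (@le_lt_trans _ _ (s + e / 2)); first by rewrite ge_min lexx orbT.
by rewrite addrC ltrD2r ltr_pdivrMr // ltr_pMr // ltr1n.
Qed.

Lemma seq_min (S : seq R) : S != [::] -> exists2 s, s \in S & forall x, x \in S -> s <= x.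
Proof.
elim: S => // x S IH _.
case: (eqVneq S [::]) => [->|/IH [s sS Hs]].
  by exists x; rewrite ?inE // => y; rewrite inE => /eqP ->.
case: (leP x s) => hxs.
  exists x; first by rewrite inE eqxx.
  move=> y; rewrite inE => /orP [/eqP->//|/Hs]; exact: le_trans.
exists s; first by rewrite inE sS orbT.
move=> y; rewrite inE => /orP [/eqP->|/Hs//]; exact: ltW.
Qed.

Lemma next_above (B : seq R) s b : s < b ->
  exists2 m, s < m <= b & forall x, x \in B -> s < x -> m <= x.
Proof.
move=> sb; elim: B => [|x B [m hm Hm]]; first by exists b; [rewrite sb lexx|].
case: (ltP s x) => hx.
  exists (Num.min m x).
    by case/andP: hm => hm1 hm2; rewrite lt_min hx hm1 ge_min hm2.
  move=> y; rewrite inE => /orP [/eqP->|yB sy]; first by rewrite ge_min lexx orbT.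
  by rewrite ge_min Hm.
exists m => // y; rewrite inE => /orP [/eqP->|yB sy]; last exact: Hm.
by move=> /(lt_le_trans)/(_ hx); rewrite ltxx.
Qed.

Lemma count_lt (P Q : pred R) (B : seq R) :
  (forall x, P x -> Q x) -> forall y, y \in B -> Q y -> ~~ P y ->
  (count P B < count Q B)%N.
Proof.
move=> PQ y; elim: B => // x B IH; rewrite inE => /orP [/eqP<- Qy nPy|yB Qy nPy].
  rewrite /= Qy (negbTE nPy) add0n add1n ltnS; apply: sub_count => z; exact: PQ.
rewrite /=; have := IH yB Qy nPy; case: (boolP (P x)) => Px.
  by rewrite (PQ _ Px) /= add1n ltnS.
by rewrite add0n => h; apply: (leq_trans h); apply: leq_addl.
Qed.

Variables (Zs : set T) (OD : T -> Prop) (adj : set T -> set T -> Prop).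
Hypothesis Hadj : forall a b z, Zs a -> Zs b -> OD z ->
  closure (connected_component Zs a) z -> closure (connected_component Zs b) z ->
  adj (connected_component Zs a) (connected_component Zs b).

Lemma L1 (B : seq R) : forall (n : nat) (a b : R), a <= b ->
  (count (fun x => ((a < x) && (x <= b))%R) B <= n)%N ->
  Zs (g a) -> Zs (g b) ->
  (forall t, a <= t <= b -> Zs (g t) \/ (t \in B /\ OD (g t))) ->
  clos_refl_trans _ adj (connected_component Zs (g a)) (connected_component Zs (g b)).
Proof.
elim=> [|n IH] a b ab cnt Za Zb H.
- suff -> : connected_component Zs (g a) = connected_component Zs (g b) by apply: rt_refl.
  apply: (@comp_path _ [set t | a <= t <= b]) => //.
  + by move=> x y /andP [ax _] /andP [_ yb] z /andP [xz zy]; apply/andP; split; [exact: le_trans ax xz|exact: le_trans zy yb].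
  + by rewrite /= lexx ab.
  + by rewrite /= lexx ab.
  move=> t /= hab; case: (H t hab) => // [[tB _]].
  case: (eqVneq t a) => [->//|ta].
  exfalso; have : (0 < count (fun x => ((a < x) && (x <= b))%R) B)%N.
    rewrite -has_count; apply/hasP; exists t => //.
    by case/andP: hab => at_ ->; rewrite andbT lt_neqAle at_ eq_sym ta.
  by rewrite ltnNge cnt.
pose S := [seq x <- B | (a < x) && (x <= b) && `[< ~ Zs (g x) >]].
case: (eqVneq S [::]) => [S0|Sn0].
- suff -> : connected_component Zs (g a) = connected_component Zs (g b) by apply: rt_refl.
  apply: (@comp_path _ [set t | a <= t <= b]) => //.
  + by move=> x y /andP [ax _] /andP [_ yb] z /andP [xz zy]; apply/andP; split; [exact: le_trans ax xz|exact: le_trans zy yb].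
  + by rewrite /= lexx ab.
  + by rewrite /= lexx ab.
  move=> t /= hab; case: (H t hab) => // [[tB _]].
  case: (eqVneq t a) => [->//|ta].
  apply: contrapT => nZ.
  have : t \in S by rewrite mem_filter tB andbT; case/andP: hab => at_ ->;
    rewrite andbT lt_neqAle at_ eq_sym ta /=; exact/asboolP.
  by rewrite S0.
have [s sS Hs] := seq_min Sn0.
move: sS; rewrite mem_filter => /andP [/andP [/andP [as_ sb] /asboolP nZs] sB].
have sb' : s < b by rewrite lt_neqAle sb andbT; apply/eqP => sbe; apply: nZs; rewrite sbe.
have ODs : OD (g s) by case: (H s) => //; [rewrite (ltW as_) sb | case].
have [m /andP [sm mb] Hm] := next_above B sb'.
pose s' := (s + m) / 2.
have ss' : s < s' by rewrite /s' ltr_pdivlMr // mulr2n mulrDr mulr1 ltrD2l.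
have s'm : s' < m by rewrite /s' ltr_pdivrMr // mulr2n mulrDr mulr1 ltrD2r.
have s'b : s' <= b by apply: le_trans mb; exact: ltW.
have reg_after : forall t, s < t <= s' -> Zs (g t).
  move=> t /andP [st ts']; case: (H t); first by rewrite (le_trans (ltW as_) (ltW st)) (le_trans ts').
    by [].
  move=> [tB _]; have := Hm t tB st; move=> mt.
  by have := lt_le_trans (le_lt_trans ts' s'm) mt; rewrite ltxx.
have reg_before : forall t, a <= t < s -> Zs (g t).
  move=> t /andP [at_ ts]; apply: contrapT => nZ.
  case: (H t); first by rewrite at_ (le_trans (ltW ts) sb).
    by [].
  move=> [tB _].
  have ta : t != a by apply/eqP => ta; apply: nZ; rewrite ta.
  have : t \in S.
    rewrite mem_filter tB andbT (le_trans (ltW ts) sb) andbT lt_neqAle at_ eq_sym ta /=.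
    exact/asboolP.
  by move=> /Hs; rewrite leNgt ts.
have Zs' : Zs (g s') by apply: reg_after; rewrite ss' lexx.
have step : adj (connected_component Zs (g a)) (connected_component Zs (g s')).
  apply: (Hadj Za Zs' ODs).
  - apply: (@closure_left (connected_component Zs (g a)) a s as_) => t ht.
    have -> : connected_component Zs (g a) = connected_component Zs (g t).
      apply: (@comp_path _ [set u | a <= u < s]) => //.
      + move=> x y /andP [ax _] /andP [_ ys] z /andP [xz zy]; apply/andP; split; [exact: le_trans ax xz|exact: le_lt_trans zy ys].
      + by rewrite /= lexx as_.
    by apply: connected_component_refl; apply: reg_before.
  - apply: (@closure_right (connected_component Zs (g s')) s s' ss') => t ht.
    have -> : connected_component Zs (g s') = connected_component Zs (g t).
      apply: (@comp_path _ [set u | s < u <= s']) => //.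
      + move=> x y /andP [sx _] /andP [_ ys] z /andP [xz zy]; apply/andP; split; [exact: lt_le_trans sx xz|exact: le_trans zy ys].
      + by rewrite /= lexx ss'.
    by apply: connected_component_refl; apply: reg_after.
apply: rt_trans; first exact: rt_step step.
apply: (IH s' b) => //.
- rewrite -ltnS; apply: leq_trans cnt.
  apply: (@count_lt _ _ B _ s) => //.
  + by move=> x /andP [s'x xb]; rewrite xb andbT (lt_trans as_ (lt_trans ss' s'x)).
  + by rewrite as_ sb.
  + by rewrite negb_and ltNge (ltW ss').
- move=> t /andP [s't tb]; apply: H; rewrite tb andbT.
  exact: le_trans (ltW (lt_trans as_ ss')) s't.
Qed.

End L1.


Section Meval.
Variables (R : realType) (n : nat).

Lemma meval_ext (v v' : 'I_n -> R) (ex : lexpr n) :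
  (forall j, j \in leaves ex -> v j = v' j) -> meval v ex = meval v' ex.
Proof.
elim: ex => [j|a IHa b IHb|a IHa b IHb] H /=.
- by apply: H; rewrite inE.
- by rewrite IHa ?IHb // => j hj; apply: H; rewrite mem_cat hj ?orbT.
- by rewrite IHa ?IHb // => j hj; apply: H; rewrite mem_cat hj ?orbT.
Qed.

Lemma meval_lb (v : 'I_n -> R) (m : R) (ex : lexpr n) : 0 < m -> m <= 1 ->
  (forall j, j \in leaves ex -> m <= v j) -> m ^+ size (leaves ex) <= meval v ex.
Proof.
move=> m0 m1; elim: ex => [j|a IHa b IHb|a IHa b IHb] H /=.
- by rewrite expr1; apply: H; rewrite inE.
- rewrite size_cat exprD; apply: ler_pM.
  + exact/exprn_ge0/ltW.
  + exact/exprn_ge0/ltW.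
  + by apply: IHa => j hj; apply: H; rewrite mem_cat hj.
  + by apply: IHb => j hj; apply: H; rewrite mem_cat hj orbT.
- have ha : m ^+ size (leaves a) <= meval v a.
    by apply: IHa => j hj; apply: H; rewrite mem_cat hj.
  have hb : m ^+ size (leaves b) <= meval v b.
    by apply: IHb => j hj; apply: H; rewrite mem_cat hj orbT.
  rewrite size_cat exprD.
  apply: (@le_trans _ _ (m ^+ size (leaves a))).
    rewrite -[X in _ <= X]mulr1; apply: ler_wpM2l; first exact/exprn_ge0/ltW.
    exact: exprn_ile1 (ltW m0) m1.
  apply: (le_trans ha); rewrite lerDl; apply: le_trans hb; exact/exprn_ge0/ltW.
Qed.

Fixpoint dmeval (v : 'I_n -> R) (k : 'I_n) (ex : lexpr n) : R :=
  match ex with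
  | LVar j => if j == k then 1 else 0
  | LAnd a b => dmeval v k a * meval v b + meval v a * dmeval v k b
  | LOr a b => dmeval v k a + dmeval v k b
  end.

Lemma dmeval_out v k ex : k \notin leaves ex -> dmeval v k ex = 0.
Proof.
elim: ex => [j|a IHa b IHb|a IHa b IHb] /=.
- by rewrite inE eq_sym => /negbTE ->.
- by rewrite mem_cat negb_or => /andP [/IHa -> /IHb ->]; rewrite mul0r mulr0 addr0.
- by rewrite mem_cat negb_or => /andP [/IHa -> /IHb ->]; rewrite addr0.
Qed.

Lemma meval_shift v k (t : R) ex : uniq (leaves ex) ->
  meval (fun j => if j == k then v j + t else v j) ex = meval v ex + t * dmeval v k ex.
Proof.
elim: ex => [j|a IHa b IHb|a IHa b IHb] /=.
- by case: (j == k); rewrite ?mulr1 ?mulr0 ?addr0.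
- rewrite cat_uniq => /and3P [ua nab ub]; rewrite IHa // IHb //.
  case: (boolP (k \in leaves a)) => ka.
  + have kb : k \notin leaves b by apply: contra nab => kb; apply/hasP; exists k.
    rewrite (dmeval_out v kb); ring.
  + rewrite (dmeval_out v ka); ring.
- rewrite cat_uniq => /and3P [ua nab ub]; rewrite IHa // IHb //.
  ring.
Qed.

Lemma dmeval_gt0 v k ex : k \in leaves ex -> (forall j, j \in leaves ex -> 0 < v j) ->
  0 < dmeval v k ex.
Proof.
have mpos : forall e, (forall j, j \in leaves e -> 0 < v j) -> 0 < meval v e.
  elim=> [j|a IHa b IHb|a IHa b IHb] H /=.
  - by apply: H; rewrite inE.
  - by rewrite mulr_gt0 // ?IHa ?IHb // => j hj; apply: H; rewrite mem_cat hj ?orbT.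
  - by rewrite addr_gt0 // ?IHa ?IHb // => j hj; apply: H; rewrite mem_cat hj ?orbT.
have dge : forall e, (forall j, j \in leaves e -> 0 < v j) -> 0 <= dmeval v k e.
  elim=> [j|a IHa b IHb|a IHa b IHb] H /=.
  - by case: (j == k).
  - have Ha : forall j, j \in leaves a -> 0 < v j by move=> j hj; apply: H; rewrite mem_cat hj.
    have Hb : forall j, j \in leaves b -> 0 < v j by move=> j hj; apply: H; rewrite mem_cat hj orbT.
    by rewrite addr_ge0 // mulr_ge0 ?IHa ?IHb // ltW // mpos.
  - have Ha : forall j, j \in leaves a -> 0 < v j by move=> j hj; apply: H; rewrite mem_cat hj.
    have Hb : forall j, j \in leaves b -> 0 < v j by move=> j hj; apply: H; rewrite mem_cat hj orbT.
    by rewrite addr_ge0 ?IHa ?IHb.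
elim: ex => [j|a IHa b IHb|a IHa b IHb] /= kin H.
- by move: kin; rewrite inE => /eqP ->; rewrite eqxx.
- have Ha : forall j, j \in leaves a -> 0 < v j by move=> j hj; apply: H; rewrite mem_cat hj.
  have Hb : forall j, j \in leaves b -> 0 < v j by move=> j hj; apply: H; rewrite mem_cat hj orbT.
  move: kin; rewrite mem_cat => /orP [ka|kb].
  + apply: (@lt_le_trans _ _ (dmeval v k a * meval v b)); first by rewrite mulr_gt0 ?IHa ?mpos.
    by rewrite lerDl mulr_ge0 ?dge // ltW // mpos.
  + apply: (@lt_le_trans _ _ (meval v a * dmeval v k b)); first by rewrite mulr_gt0 ?IHb ?mpos.
    by rewrite lerDr mulr_ge0 ?dge // ltW // mpos.
- have Ha : forall j, j \in leaves a -> 0 < v j by move=> j hj; apply: H; rewrite mem_cat hj.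
  have Hb : forall j, j \in leaves b -> 0 < v j by move=> j hj; apply: H; rewrite mem_cat hj orbT.
  move: kin; rewrite mem_cat => /orP [ka|kb].
  + by apply: (@lt_le_trans _ _ (dmeval v k a)); [exact: IHa|rewrite lerDl dge].
  + by apply: (@lt_le_trans _ _ (dmeval v k b)); [exact: IHb|rewrite lerDr dge].
Qed.

Lemma meval_cont (T : topologicalType) (v : T -> 'I_n -> R) ex :
  (forall j, continuous (fun t => v t j)) -> continuous (fun t => meval (v t) ex).
Proof.
move=> H; elim: ex => [j|a IHa b IHb|a IHa b IHb] /=.
- exact: H.
- by move=> x; exact: (continuousM (IHa x) (IHb x)).
- by move=> x; exact: (continuousD (IHa x) (IHb x)).
Qed.

End Meval.


Section Net.
Variables (R : realType) (N : nat) (sgn : 'I_N -> 'I_N -> option bool)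
  (M : 'I_N -> option (lexpr N)).
Hypothesis wf : wf_network sgn M.
Local Notation param := {ptws pidx sgn -> R}.
Local Notation edge := (edge sgn).
Local Notation edge_of := (edge_of sgn).
Local Notation is_edge := (is_edge sgn).
Local Notation src_set := (src_set sgn).
Local Notation eq_holds := Defs.eq_holds.
Implicit Types (z w : param).

Definition Real z (e : edge) (p : {ffun 'I_N -> bool}) : Prop :=
  exists x, cellpt z x /\ face z e x /\ pattern z (esrc e) x = p.

Definition pos z := (forall e, 0 < pl z e /\ pl z e < pu z e /\ 0 < pth z e) /\
  (forall i, 0 < pg z i).
Definition distinct z := forall e e' : edge, esrc e = esrc e' -> e <> e' ->
  pth z e <> pth z e'.
Definition facecond z := forall e p, Real z e p ->
  Lambda_p M z (esrc e) p <> pg z (esrc e) * pth z e.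

Lemma ZregP z : Zreg M z <-> [/\ pos z, distinct z & facecond z].
Proof.
split.
- move=> [H1 [H2 [H3 H4]]]; split => //.
  move=> e p [x [cx [fx <-]]]; exact: H4.
- move=> [[H1 H2] H3 H4]; split=> //; split=> //; split=> //.
  move=> e x cx fx; apply: H4; by exists x.
Qed.

Definition vp z (i : 'I_N) (p : {ffun 'I_N -> bool}) : 'I_N -> R :=
  fun k => if edge_of k i is Some e then sig_val z e (p k) else 0.

Lemma LambdaE z i p : Lambda_p M z i p = if M i is Some t then meval (vp z i p) t else 0.
Proof. by []. Qed.

Lemma sig_valE z e b : sig_val z e b = if b == is_act e then pu z e else pl z e.
Proof. by []. Qed.

Lemma wf_leaves i t : M i = Some t -> uniq (leaves t) /\ forall j, (j \in leaves t) = is_edge j i.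
Proof.
move=> Mi; have := (proj2 wf) i; rewrite Mi => pe.
split; first by rewrite (perm_uniq pe) enum_uniq.
by move=> j; rewrite (perm_mem pe) mem_enum /src_set inE.
Qed.

Lemma wf_none i : M i = None -> forall j, ~~ is_edge j i.
Proof.
move=> Mi j; have := (proj2 wf) i; rewrite Mi => hs.
apply/negP => hj; have : j \in src_set i by rewrite /src_set inE.
by rewrite hs inE.
Qed.

Lemma edge_ofN j i : ~~ is_edge j i -> edge_of j i = None.
Proof. by move=> h; rewrite /edge_of insubN. Qed.

Lemma edge_ofT j i : is_edge j i -> exists e, edge_of j i = Some e /\ esrc e = j /\ etgt e = i.
Proof. by move=> h; rewrite /edge_of insubT /=; eexists; split. Qed.

Lemma edge_of_e (e : edge) : edge_of (esrc e) (etgt e) = Some e.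
Proof.
case: e => [[a b] h]; rewrite /edge_of /esrc /etgt /= insubT /=.
by congr Some; apply: val_inj.
Qed.

Lemma edge_inj (e e' : edge) : esrc e = esrc e' -> etgt e = etgt e' -> e = e'.
Proof.
move=> h1 h2; apply: val_inj; move: h1 h2; rewrite /esrc /etgt.
by case: (val e) => a b; case: (val e') => a' b' /= -> ->.
Qed.

Lemma edge_isedge (e : edge) : is_edge (esrc e) (etgt e).
Proof. by case: e => [[a b] h]. Qed.

Lemma edge_of_src j i (e : edge) : edge_of j i = Some e -> esrc e = j /\ etgt e = i.
Proof.
rewrite /edge_of; case: insubP => // u _ hu [<-].
by rewrite /esrc /etgt hu.
Qed.

Lemma Real_false z e p k : Real z e p -> ~~ is_edge k (esrc e) -> p k = false.
Proof.
move=> [x [_ [_ <-]]] hk; by rewrite /pattern ffunE edge_ofN.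
Qed.

Lemma Real_eq z w e p : (forall f, pth z f = pth w f) -> Real z e p -> Real w e p.
Proof.
move=> H; have E : pth z = pth w by apply/funext.
by rewrite /Real /cellpt /face /pattern E.
Qed.

Lemma Lambda_eq z w i p : (forall f, pl z f = pl w f) -> (forall f, pu z f = pu w f) ->
  Lambda_p M z i p = Lambda_p M w i p.
Proof.
move=> H1 H2; have E1 : pl z = pl w by apply/funext.
have E2 : pu z = pu w by apply/funext.
by rewrite /Lambda_p /sig_val E1 E2.
Qed.

Lemma vp_bounds z i p t m : M i = Some t -> pos z -> (forall e, m <= pl z e) ->
  forall j, j \in leaves t -> m <= vp z i p j /\ 0 < vp z i p j.
Proof.
move=> Mi [H1 _] Hm j; have [_ ->] := wf_leaves Mi => hj.
rewrite /vp; have [e [-> _]] := edge_ofT hj.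
rewrite sig_valE; have [l0 [lu _]] := H1 e.
case: ifP => _; split => //; try exact: Hm.
- exact: le_trans (Hm e) (ltW lu).
- exact: lt_trans lu.
Qed.

Lemma Lambda_lb z i p t m : M i = Some t -> pos z -> 0 < m -> m <= 1 ->
  (forall e, m <= pl z e) -> m ^+ N <= Lambda_p M z i p.
Proof.
move=> Mi pz m0 m1 Hm; rewrite LambdaE Mi.
apply: (@le_trans _ _ (m ^+ size (leaves t))).
  apply: (ler_wiXn2l (ltW m0) m1).
  have [ut _] := wf_leaves Mi.
  have sub : {subset leaves t <= enum 'I_N} by move=> x _; rewrite mem_enum.
  by have := uniq_leq_size ut sub; rewrite size_enum_ord.
apply: meval_lb => // j hj; exact: (proj1 (vp_bounds p Mi pz Hm hj)).
Qed.

Lemma Lambda_gt0 z i p t : M i = Some t -> pos z -> 0 < Lambda_p M z i p.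
Proof.
move=> Mi pz.
have [m [m0 [m1 Hm]]] : exists m : R, 0 < m /\ m <= 1 /\ forall e, m <= pl z e.
  pose S := \sum_e (pl z e)^-1.
  exists (1 + S)^-1.
  have S0 : 0 <= S by apply: sumr_ge0 => e _; rewrite invr_ge0 ltW //; case: (proj1 pz e).
  have S1 : 0 < 1 + S by lra.
  split; first by rewrite invr_gt0.
  split; first by rewrite invr_le1 // ?unitfE ?lt0r_neq0 //; lra.
  move=> e; have le0 := proj1 ((proj1 pz) e).
  rewrite -[pl z e]invrK lef_pV2 ?posrE ?invr_gt0 //.
  have : (pl z e)^-1 <= S.
    rewrite /S (bigD1 e) //= lerDl.
    by apply: sumr_ge0 => f _; rewrite invr_ge0 ltW //; case: (proj1 pz f).
  lra.
apply: lt_le_trans (Lambda_lb p Mi pz m0 m1 Hm); exact: exprn_gt0.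
Qed.

Lemma Lambda_none z i p : M i = None -> Lambda_p M z i p = 0.
Proof. by rewrite LambdaE => ->. Qed.

Lemma pos_Zbar z : pos z -> Zbar z.
Proof.
move=> [H1 H2]; split => [e|i]; last exact/ltW.
have [a [b c]] := H1 e; split; first exact/ltW.
by split; [exact/ltW/(lt_trans a)|split; exact/ltW].
Qed.

Lemma label_cases z a : pos z -> eq_holds M z a ->
  (exists e e', a = EqThTh e e' /\ [/\ esrc e = esrc e', (etgt e < etgt e')%N & pth z e = pth z e'])
  \/ (exists e p, a = EqFace e p /\ Real z e p /\ pg z (esrc e) * pth z e = Lambda_p M z (esrc e) p).
Proof.
move=> [H1 H2]; case: a => /=.
- by move=> e E; have [_ [h _]] := H1 e; move: h; rewrite E ltxx.
- by move=> e E; have [h _] := H1 e; move: h; rewrite E ltxx.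
- by move=> e E; have [h1 [h2 _]] := H1 e; move: (lt_trans h1 h2); rewrite E ltxx.
- by move=> e E; have [_ [_ h]] := H1 e; move: h; rewrite E ltxx.
- by move=> i E; have := H2 i; rewrite E ltxx.
- by move=> e e' [h1 [h2 h3]]; left; exists e, e'; split.
- by move=> e p [[x hx] h]; right; exists e, p; split => //; split => //; exists x.
Qed.

Lemma etgt_neq (e e' : edge) : (etgt e < etgt e')%N -> e <> e'.
Proof. by move=> h E; move: h; rewrite E ltnn. Qed.

Lemma Zreg_nolabel z a : Zreg M z -> ~ eq_holds M z a.
Proof.
move=> /ZregP [pz dz fz] H; case: (label_cases pz H).
- move=> [e [e' [_ [s lt E]]]]; exact: (dz e e' s (etgt_neq lt) E).
- move=> [e [p [_ [r E]]]]; exact: (fz e p r (esym E)).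
Qed.

End Net.


Lemma aff_cont (R : realType) (a b : R) : continuous (fun t : R => a + t * b).
Proof.
move=> x; apply: cvgD; first exact: cvg_cst.
apply: cvgM; [exact: cvg_id | exact: cvg_cst].
Qed.
Lemma near_pos (R : realType) (f : R -> R) : continuous f -> 0 < f 0 -> \forall t \near 0, 0 < f t.
Proof. by move=> cf f0; apply: (@cvgr_gt _ _ _ _ f (f 0) (cf 0) 0 f0). Qed.
Lemma near_neq (R : realType) (f : R -> R) : continuous f -> f 0 != 0 -> \forall t \near 0, f t != 0.
Proof. by move=> cf f0; apply: (@cvgr_neq0 _ _ _ _ _ f (f 0) (cf 0) f0). Qed.
Lemma near_ball (R : realType) (P : R -> Prop) : (\forall t \near (0:R), P t) -> exists2 d, 0 < d & forall t, `|t| < d -> P t.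
Proof.
move=> /nbhs_ballP [d /= d0 H]; exists d => // t ht; apply: H.
by rewrite -ball_normE /ball_ /= sub0r normrN.
Qed.

Section Net2.
Variables (R : realType) (N : nat) (sgn : 'I_N -> 'I_N -> option bool)
  (M : 'I_N -> option (lexpr N)).
Hypothesis wf : wf_network sgn M.
Local Notation param := {ptws pidx sgn -> R}.
Local Notation edge := (edge sgn).
Local Notation edge_of := (edge_of sgn).
Local Notation is_edge := (is_edge sgn).
Local Notation src_set := (src_set sgn).
Local Notation eq_holds := Defs.eq_holds.
Implicit Types (z w : param).

Lemma near_forall (I : finType) (P : I -> R -> Prop) :
  (forall i, \forall t \near (0:R), P i t) -> \forall t \near 0, forall i, P i t.
Proof. by move=> H; apply: (@filter_forall R I P (nbhs (0:R)) (nbhs_filter 0)). Qed.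

Definition comp z := connected_component (Zreg M) z.
Definition reach z w := clos_refl_trans _ (gpg_adj M) (comp z) (comp w).
Definition seg z w (t : R) : param := fun c => z c + t * (w c - z c).

Lemma seg0 z w : seg z w 0 = z.
Proof. by apply/funext => c; rewrite /seg mul0r addr0. Qed.
Lemma seg1 z w : seg z w 1 = w.
Proof. by apply/funext => c; rewrite /seg mul1r addrC subrK. Qed.

Lemma seg_cont z w : continuous (seg z w).
Proof. apply: ptws_cont => c; exact: aff_cont. Qed.

Lemma reach_trans z1 z2 z3 : reach z1 z2 -> reach z2 z3 -> reach z1 z3.
Proof. exact: rt_trans. Qed.

Lemma reach_refl z : reach z z.
Proof. exact: rt_refl. Qed.

Lemma Hadj_ok : forall a b z, Zreg M a -> Zreg M b -> one_deficient M z ->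
  closure (connected_component (Zreg M) a) z -> closure (connected_component (Zreg M) b) z ->
  gpg_adj M (connected_component (Zreg M) a) (connected_component (Zreg M) b).
Proof.
move=> a b z Za Zb oz ca cb; split; first by exists a.
split; first by exists b.
by exists z; split; [split => //; case: oz|split => //; case: oz].
Qed.

Lemma seg_reach z w (B : seq R) : Zreg M z -> Zreg M w ->
  (forall t, 0 <= t <= 1 -> Zreg M (seg z w t) \/ (t \in B /\ one_deficient M (seg z w t))) ->
  reach z w.
Proof.
move=> Zz Zw H.
have := @L1 R _ (seg z w) (@seg_cont z w) _ _ _ Hadj_ok B _ 0 1 ler01 (leqnn _).
by rewrite /reach /comp !(seg0, seg1); apply.
Qed.

Lemma seg_reach0 z w : (forall t, 0 <= t <= 1 -> Zreg M (seg z w t)) -> reach z w.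
Proof.
move=> H; apply: (@seg_reach z w [::]).
- by have := H 0; rewrite seg0 lexx ler01; apply.
- by have := H 1; rewrite seg1 lexx ler01; apply.
by move=> t ht; left; apply: H.
Qed.

Lemma Lambda_seg_cont z w i p : continuous (fun t => Lambda_p M (seg z w t) i p).
Proof.
rewrite /Lambda_p; case: (M i) => [ex|]; last exact: cst_continuous.
apply: meval_cont => j; case: (edge_of j i) => [f|]; last exact: cst_continuous.
rewrite /sig_val; case: (p j == is_act f); exact: aff_cont.
Qed.

Lemma Zreg_near z w : Zreg M z -> (forall f, pth w f = pth z f) -> (forall i, pg w i = pg z i) ->
  \forall t \near 0, Zreg M (seg z w t).
Proof.
move=> /ZregP [[H1 H2] dz fz] Hth Hg.
have Eth : forall t f, pth (seg z w t) f = pth z f.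
  by move=> t f; rewrite /pth /seg -/(pth w f) -/(pth z f) Hth subrr mulr0 addr0.
have Eg : forall t i, pg (seg z w t) i = pg z i.
  by move=> t i; rewrite /pg /seg -/(pg w i) -/(pg z i) Hg subrr mulr0 addr0.
have Hl : \forall t \near 0, forall e : edge, 0 < pl (seg z w t) e.
  apply: near_forall => e; apply: near_pos; first exact: aff_cont.
  by rewrite /pl /seg mul0r addr0; case: (H1 e).
have Hlu : \forall t \near 0, forall e : edge, 0 < pu (seg z w t) e - pl (seg z w t) e.
  apply: near_forall => e.
  have h0 : 0 < (pu z e - pl z e) + 0 * ((pu w e - pu z e) - (pl w e - pl z e)).
    by rewrite mul0r addr0 subr_gt0; case: (H1 e) => _ [].
  move: (near_pos (@aff_cont R (pu z e - pl z e) ((pu w e - pu z e) - (pl w e - pl z e))) h0).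
  apply: filterS => t ht.
  suff -> : pu (seg z w t) e - pl (seg z w t) e =
    (pu z e - pl z e) + t * ((pu w e - pu z e) - (pl w e - pl z e)) by [].
  rewrite /pu /pl /seg; ring.
have Hf : \forall t \near 0, forall ep : (edge * {ffun 'I_N -> bool})%type,
    Real z ep.1 ep.2 -> Lambda_p M (seg z w t) (esrc ep.1) ep.2 - pg z (esrc ep.1) * pth z ep.1 != 0.
  apply: near_forall => -[e p] /=.
  case: (pselect (Real z e p)) => hr; last by apply: (filterE (nbhs_filter (0:R))) => t /hr.
  have : \forall t \near 0, Lambda_p M (seg z w t) (esrc e) p - pg z (esrc e) * pth z e != 0.
    apply: near_neq.
      move=> x; exact: (continuousB (@Lambda_seg_cont z w (esrc e) p x) (@cst_continuous _ _ (pg z (esrc e) * pth z e) x)).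
    by rewrite /= seg0 subr_eq0; apply/eqP; apply: fz.
  by apply: filterS => t ht _.
near=> t.
have hl : forall e, 0 < pl (seg z w t) e by near: t.
have hlu : forall e, 0 < pu (seg z w t) e - pl (seg z w t) e by near: t.
have hf : forall ep : (edge * {ffun 'I_N -> bool})%type,
    Real z ep.1 ep.2 -> Lambda_p M (seg z w t) (esrc ep.1) ep.2 - pg z (esrc ep.1) * pth z ep.1 != 0.
  by near: t.
apply/ZregP; split.
- split => [e|i]; last by rewrite Eg.
  split; first exact: hl.
  by split; [rewrite -subr_gt0; exact: hlu|rewrite Eth; case: (H1 e) => _ []].
- by move=> e e' s ne; rewrite !Eth; apply: dz.
- move=> e p r; rewrite Eg Eth; apply/eqP; rewrite -subr_eq0.
  apply: (hf (e, p)); apply: Real_eq r => f; exact: Eth.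
Unshelve. all: by end_near.
Qed.

End Net2.


Section Net3.
Variables (R : realType) (N : nat) (sgn : 'I_N -> 'I_N -> option bool)
  (M : 'I_N -> option (lexpr N)).
Hypothesis wf : wf_network sgn M.
Local Notation param := {ptws pidx sgn -> R}.
Local Notation edge := (edge sgn).
Local Notation edge_of := (edge_of sgn).
Local Notation is_edge := (is_edge sgn).
Local Notation src_set := (src_set sgn).
Local Notation eq_holds := Defs.eq_holds.
Local Notation ffb := {ffun 'I_N -> bool}.
Implicit Types (z w : param).

Definition condc z (c : edge * edge * ffb * ffb) : Prop :=
  esrc c.1.1.1 = esrc c.1.1.2 ->
  (exists k, is_edge k (esrc c.1.1.1) /\ c.1.2 k != c.2 k) ->
  Lambda_p M z (esrc c.1.1.1) c.1.2 * pth z c.1.1.2 != Lambda_p M z (esrc c.1.1.1) c.2 * pth z c.1.1.1.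

Definition gen z := forall c, condc z c.

Lemma sig_val_seg z w t f b : sig_val (seg z w t) f b = sig_val z f b + t * (sig_val w f b - sig_val z f b).
Proof. by rewrite !sig_valE; case: ifP. Qed.

Lemma pth_seg z w t f : pth w f = pth z f -> pth (seg z w t) f = pth z f.
Proof. by move=> h; rewrite /pth /seg -/(pth w f) -/(pth z f) h subrr mulr0 addr0. Qed.

Lemma pg_seg z w t i : pg w i = pg z i -> pg (seg z w t) i = pg z i.
Proof. by move=> h; rewrite /pg /seg -/(pg w i) -/(pg z i) h subrr mulr0 addr0. Qed.

Lemma condc_near z w c : (forall f, pth w f = pth z f) -> condc z c ->
  \forall t \near 0, condc (seg z w t) c.
Proof.
move=> Hth; rewrite /condc.
case: (pselect (esrc c.1.1.1 = esrc c.1.1.2)) => A; last first.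
  by move=> _; apply: (filterE (nbhs_filter (0:R))) => t /A.
case: (pselect (exists k, is_edge k (esrc c.1.1.1) /\ c.1.2 k != c.2 k)) => B; last first.
  by move=> _; apply: (filterE (nbhs_filter (0:R))) => t _ /B.
move=> /(_ A B) H.
have : \forall t \near 0, Lambda_p M (seg z w t) (esrc c.1.1.1) c.1.2 * pth z c.1.1.2 -
   Lambda_p M (seg z w t) (esrc c.1.1.1) c.2 * pth z c.1.1.1 != 0.
  apply: near_neq; last by rewrite /= !seg0 subr_eq0.
  move=> x.
  have c1 := continuousM (@Lambda_seg_cont _ _ _ M z w (esrc c.1.1.1) c.1.2 x) (@cst_continuous _ _ (pth z c.1.1.2) x).
  have c2 := continuousM (@Lambda_seg_cont _ _ _ M z w (esrc c.1.1.1) c.2 x) (@cst_continuous _ _ (pth z c.1.1.1) x).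
  exact: (continuousB c1 c2).
apply: filterS => t ht _ _; rewrite !pth_seg //; by rewrite -subr_eq0.
Qed.


Definition bump z (idx : pidx sgn) : param := fun c => if c == idx then z c + 1 else z c.

Definition bidx (f : edge) (b : bool) : pidx sgn := inr (f, if b then 1%R else 0%R).

Lemma inr_neq (a b : edge) (k k' : 'I_3) : val k != val k' ->
  (inr (a, k) == inr (b, k') :> pidx sgn) = false.
Proof. by move=> h; apply/eqP => -[_ E]; rewrite E eqxx in h. Qed.

Lemma inr_eq (a b : edge) (k : 'I_3) :
  (inr (a, k) == inr (b, k) :> pidx sgn) = (a == b).
Proof. by apply/eqP/eqP => [[->]|->]. Qed.

Lemma bump_pth z f b f' : pth (bump z (bidx f b)) f' = pth z f'.
Proof. by rewrite /pth /bump /bidx; case: b; rewrite inr_neq. Qed.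

Lemma bump_pg z f b i : pg (bump z (bidx f b)) i = pg z i.
Proof. by []. Qed.

Lemma bump_sig z f b f' bb : sig_val (bump z (bidx f b)) f' bb =
  sig_val z f' bb + (if (f' == f) && ((bb == is_act f') == b) then 1 else 0).
Proof.
rewrite !sig_valE /pu /pl /bump /bidx.
case: b; case: (bb == is_act f'); rewrite ?inr_eq ?inr_neq //=; by case: (f' == f); rewrite /= ?addr0.
Qed.


Lemma perturb_step z c : Zreg M z -> exists w, [/\ Zreg M w, reach M z w, condc w c,
  (forall c', condc z c' -> condc w c') &
  (forall f, pth w f = pth z f) /\ (forall i, pg w i = pg z i)].
Proof.
move=> Zz; case: (pselect (condc z c)) => hc.
  by exists z; split => //; exact: reach_refl.
have A : esrc c.1.1.1 = esrc c.1.1.2 by apply: contrapT => nA; apply: hc => /nA.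
have [k [hk pk]] : exists k, is_edge k (esrc c.1.1.1) /\ c.1.2 k != c.2 k.
  by apply: contrapT => nB; apply: hc => _ /nB.
have E : Lambda_p M z (esrc c.1.1.1) c.1.2 * pth z c.1.1.2 =
         Lambda_p M z (esrc c.1.1.1) c.2 * pth z c.1.1.1.
  by apply/eqP; apply: contrapT => nE; apply: hc => _ _; exact/negP.
move: A hk pk E; case: c hc => [[[e e'] p] p'] /= hc A hk pk E.
set i := esrc e in hk E.
have [f [Ef [sf tf]]] := edge_ofT hk.
case Mi: (M i) => [ex|]; last by have := wf_none wf Mi k; rewrite hk.
have [uex lex] := wf_leaves wf Mi.
have [pz dz fz] := (ZregP _ z).1 Zz.
pose b := p k == is_act f.
pose w2 := bump z (bidx f b).
pose D := dmeval (vp z i p) k ex.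
have D0 : 0 < D.
  apply: dmeval_gt0; first by rewrite lex.
  move=> j hj; have := @vp_bounds R N sgn M wf z i p ex 0 Mi pz.
  by move=> /(_ _ j hj) [] //; move=> e0; case: (proj1 pz e0) => /ltW.
have HvP : forall t, Lambda_p M (seg z w2 t) i p = Lambda_p M z i p + t * D.
  move=> t; rewrite !LambdaE Mi -meval_shift //; apply: meval_ext => j _.
  rewrite /vp; case E': (edge_of j i) => [f'|].
  - have [sf' tf'] := edge_of_src E'.
    rewrite sig_val_seg bump_sig.
    case: (eqVneq j k) => [ejk|njk].
    + have -> : f' = f by apply: edge_inj; rewrite ?sf' ?sf ?tf' ?tf.
      rewrite eqxx /= ejk -/b eqxx; ring.
    + have -> : (f' == f) = false.
        by apply/eqP => ef; move: njk; rewrite -sf' -sf ef eqxx.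
      rewrite /=; ring.
  - case: (eqVneq j k) => [ejk|//]; by move: E'; rewrite ejk Ef.
have HvP' : forall t, Lambda_p M (seg z w2 t) i p' = Lambda_p M z i p'.
  move=> t; rewrite !LambdaE Mi; apply: meval_ext => j _.
  rewrite /vp; case E': (edge_of j i) => [f'|] //.
  have [sf' tf'] := edge_of_src E'.
  rewrite sig_val_seg bump_sig.
  case: (eqVneq j k) => [ejk|njk].
  + have ef : f' = f by apply: edge_inj; rewrite ?sf' ?sf ?tf' ?tf.
    have -> : (p' j == is_act f') == b = false.
      rewrite ef ejk /b; move: pk; by case: (p k); case: (p' k); case: (is_act f).
    rewrite andbF /=; ring.
  + have -> : (f' == f) = false.
      by apply/eqP => ef; move: njk; rewrite -sf' -sf ef eqxx.
    rewrite /=; ring.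
have Hn : \forall t \near 0, Zreg M (seg z w2 t) /\ forall c', condc z c' -> condc (seg z w2 t) c'.
  apply: filterI.
    apply: Zreg_near; [exact: Zz | move=> f'; exact: bump_pth | move=> i'; exact: bump_pg].
  apply: near_forall => c'.
  case: (pselect (condc z c')) => hc'.
    move: (condc_near (fun f' => @bump_pth z f b f') hc').
    by apply: filterS => t ht _.
  by apply: (filterE (nbhs_filter (0:R))) => t /hc'.
have [d d0 Hd] := near_ball Hn.
pose t0 := d / 2.
have t00 : 0 < t0 by rewrite /t0 divr_gt0.
have t0d : t0 < d by rewrite /t0 ltr_pdivrMr // ltr_pMr // ltr1n.
have segE : forall s, seg z (seg z w2 t0) s = seg z w2 (s * t0).
  by move=> s; apply/funext => x; rewrite /seg; ring.
have [Zw Cw] : Zreg M (seg z w2 t0) /\ forall c', condc z c' -> condc (seg z w2 t0) c'.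
  by apply: Hd; rewrite gtr0_norm.
exists (seg z w2 t0); split => //.
- apply: seg_reach0 => s /andP [s0 s1]; rewrite segE.
  apply: (proj1 (Hd _ _)); rewrite normrM (ger0_norm s0) (gtr0_norm t00).
  nra.
- move=> _ _ /=; rewrite HvP HvP' !pth_seg ?bump_pth //.
  have th0 : 0 < pth z e' by case: (proj1 pz e') => _ [].
  rewrite mulrDl E; apply/eqP => H.
  have : t0 * D * pth z e' = 0.
    by move: H; rewrite -mulrA => /eqP; rewrite addrC -subr_eq0 addrK => /eqP.
  by apply/eqP; rewrite !mulf_neq0 // gt_eqF.
- by split => [f'|i']; rewrite ?pth_seg ?pg_seg ?bump_pth ?bump_pg.
Qed.

Lemma perturb z : Zreg M z -> exists w, [/\ Zreg M w, reach M z w, gen w,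
  (forall f, pth w f = pth z f) & (forall i, pg w i = pg z i)].
Proof.
move=> Zz.
suff : forall cs : seq (edge * edge * ffb * ffb), exists w, [/\ Zreg M w, reach M z w,
  (forall c, c \in cs -> condc w c),
  (forall f, pth w f = pth z f) & (forall i, pg w i = pg z i)].
  move=> /(_ (enum {: edge * edge * ffb * ffb})) [w [Zw rw cw hth hg]].
  by exists w; split => // c; apply: cw; rewrite mem_enum.
elim => [|c cs [w1 [Z1 r1 c1 th1 g1]]].
  by exists z; split => //; exact: reach_refl.
have [w [Zw rw cw pres [th g]]] := perturb_step c Z1.
exists w; split => //.
- exact: reach_trans r1 rw.
- by move=> c'; rewrite inE => /orP [/eqP ->//|/c1]; apply: pres.
- by move=> f; rewrite th th1.
- by move=> i; rewrite g g1.
Qed.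

End Net3.


Section Net4.
Variables (R : realType) (N : nat) (sgn : 'I_N -> 'I_N -> option bool)
  (M : 'I_N -> option (lexpr N)).
Hypothesis wf : wf_network sgn M.
Local Notation param := {ptws pidx sgn -> R}.
Local Notation edge := (edge sgn).
Local Notation edge_of := (edge_of sgn).
Local Notation is_edge := (is_edge sgn).
Local Notation src_set := (src_set sgn).
Local Notation eq_holds := Defs.eq_holds.
Local Notation ffb := {ffun 'I_N -> bool}.
Implicit Types (z w : param).

Lemma pl_seg z w t f : pl w f = pl z f -> pl (seg z w t) f = pl z f.
Proof. by move=> h; rewrite /pl /seg -/(pl w f) -/(pl z f) h subrr mulr0 addr0. Qed.
Lemma pu_seg z w t f : pu w f = pu z f -> pu (seg z w t) f = pu z f.
Proof. by move=> h; rewrite /pu /seg -/(pu w f) -/(pu z f) h subrr mulr0 addr0. Qed.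

Definition setg z (i : 'I_N) (v : R) : param := fun c => if c == inl i then v else z c.

Lemma inl_eq (a b : 'I_N) : (inl a == inl b :> pidx sgn) = (a == b).
Proof. by apply/eqP/eqP => [[->]|->]. Qed.

Lemma setg_l z i v f : pl (setg z i v) f = pl z f. Proof. by []. Qed.
Lemma setg_u z i v f : pu (setg z i v) f = pu z f. Proof. by []. Qed.
Lemma setg_th z i v f : pth (setg z i v) f = pth z f. Proof. by []. Qed.
Lemma setg_g z i v j : pg (setg z i v) j = if j == i then v else pg z j.
Proof. by rewrite /pg /setg inl_eq. Qed.

Lemma ffb_eq_edges (p q : ffb) i : (forall k, ~~ is_edge k i -> p k = false) ->
  (forall k, ~~ is_edge k i -> q k = false) ->
  ~ (exists k, is_edge k i /\ p k != q k) -> p = q.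
Proof.
move=> hp hq hn; apply/ffunP => k.
case: (boolP (is_edge k i)) => hk; last by rewrite hp ?hq.
by apply/eqP; apply: contrapT => /negP nk; apply: hn; exists k.
Qed.

Lemma gamma_move z i v : Zreg M z -> gen M z -> 0 < v ->
  (forall e p, esrc e = i -> Lambda_p M z i p <> v * pth z e) ->
  reach M z (setg z i v).
Proof.
move=> Zz gz v0 Hv.
have [[H1 H2] dz fz] := (ZregP _ z).1 Zz.
set w := setg z i v.
set g0 := pg z i.
have g00 : 0 < g0 by apply: H2.
have El : forall t f, pl (seg z w t) f = pl z f by move=> t f; apply: pl_seg.
have Eu : forall t f, pu (seg z w t) f = pu z f by move=> t f; apply: pu_seg.
have Eth : forall t f, pth (seg z w t) f = pth z f by move=> t f; apply: pth_seg.
have EL : forall t j p, Lambda_p M (seg z w t) j p = Lambda_p M z j p.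
  by move=> t j p; apply: Lambda_eq.
have ER : forall t f p, Real (seg z w t) f p <-> Real z f p.
  move=> t f p; split; apply: Real_eq => f'; by rewrite Eth.
have Eg : forall t j, pg (seg z w t) j = if j == i then g0 + t * (v - g0) else pg z j.
  move=> t j; rewrite /pg /seg -/(pg w j) -/(pg z j) /w setg_g.
  case: (eqVneq j i) => [->|nji] //.
  by rewrite subrr mulr0 addr0.
pose B := [seq (Lambda_p M z i ep.2 / pth z ep.1 - g0) / (v - g0) | ep <- enum {: edge * ffb}].
apply: (@seg_reach _ _ _ M z w B) => //.
  apply/ZregP; split.
  - split => [f|j]; first by rewrite setg_l setg_u setg_th; apply: H1.
    by rewrite setg_g; case: (j == i).
  - by move=> f f'; rewrite !setg_th; apply: dz.
  - move=> f p; have -> : Lambda_p M w (esrc f) p = Lambda_p M z (esrc f) p by apply: Lambda_eq.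
    rewrite setg_g setg_th.
    have Hr : Real w f p -> Real z f p by apply: Real_eq.
    move=> /Hr r; case: (eqVneq (esrc f) i) => [efi|nfi].
      by rewrite efi; apply: Hv.
    exact: fz.
move=> t /andP [t0 t1].
have gt0 : 0 < g0 + t * (v - g0).
  have -> : g0 + t * (v - g0) = (1 - t) * g0 + t * v by ring.
  case: (eqVneq t 0) => [->|nt0]; first by rewrite subr0 mul1r mul0r addr0.
  apply: ltr_wpDl; first by rewrite mulr_ge0 // ?subr_ge0 // ltW.
  by rewrite mulr_gt0 // lt_neqAle eq_sym nt0.
have posS : pos (seg z w t).
  split => [f|j]; first by rewrite El Eu Eth; apply: H1.
  by rewrite Eg; case: (j == i).
case: (pselect (exists ep : edge * ffb, [/\ Real z ep.1 ep.2, esrc ep.1 = i &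
    Lambda_p M z i ep.2 = (g0 + t * (v - g0)) * pth z ep.1])) => [[[e p] /= [re se Ee]]|nex].
- right.
  have vg : v - g0 != 0.
    apply/eqP => vg; apply: (fz e p re); rewrite se Ee vg mulr0 addr0.
    by [].
  have th0 : 0 < pth z e by case: (H1 e) => _ [].
  split.
    apply/mapP; exists (e, p); first by rewrite mem_enum.
    rewrite /= Ee; field; rewrite vg gt_eqF //.
  split; first exact: pos_Zbar.
  exists (EqFace e p); split.
    split; first by have := (ER t e p).2 re; case=> x hx; exists x.
    by rewrite Eg se eqxx EL Eth Ee.
  move=> b hb; case: (label_cases posS hb).
    move=> [f [f' [_ [sff ltf Ef]]]]; exfalso.
    by move: Ef; rewrite !Eth; apply: dz sff (etgt_neq ltf).
  move=> [f [q [-> [rq Eq]]]].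
  have rq' := (ER t f q).1 rq.
  move: Eq; rewrite Eg EL Eth.
  case: (eqVneq (esrc f) i) => [sfi|nfi]; last first.
    by move=> Eq; exfalso; apply: (fz f q rq'); rewrite Eq.
  move=> Eq.
  have hcond := gz (e, f, p, q); rewrite /condc /= in hcond.
  have pq : p = q.
    apply: (@ffb_eq_edges _ _ i).
    - by move=> k hk; apply: (Real_false re); rewrite se.
    - by move=> k hk; apply: (Real_false rq'); rewrite sfi.
    move=> hk; have := hcond (etrans se (esym sfi)); rewrite se => /(_ hk).
    have Eq' : Lambda_p M z i q = (g0 + t * (v - g0)) * pth z f by rewrite Eq sfi.
    by rewrite Ee Eq' mulrAC eqxx.
  move: Eq; rewrite -pq sfi Ee => /(mulfI (lt0r_neq0 gt0)) Eth'.
  have -> : f = e.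
    case: (pselect (f = e)) => // nfe; exfalso.
    by apply: (dz f e _ nfe Eth'); rewrite sfi se.
  by [].
- left; apply/ZregP; split => //.
  + by move=> f f'; rewrite !Eth; apply: dz.
  + move=> f p /(ER t) r; rewrite EL Eg Eth.
    case: (eqVneq (esrc f) i) => [sfi|nfi]; last exact: fz.
    move=> Ef; apply: nex; exists (f, p); split => //=.
    by rewrite -Ef sfi.
Qed.

End Net4.


Section Net5.
Variables (R : realType) (N : nat) (sgn : 'I_N -> 'I_N -> option bool)
  (M : 'I_N -> option (lexpr N)).
Hypothesis wf : wf_network sgn M.
Local Notation param := {ptws pidx sgn -> R}.
Local Notation edge := (edge sgn).
Local Notation edge_of := (edge_of sgn).
Local Notation is_edge := (is_edge sgn).
Local Notation src_set := (src_set sgn).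
Local Notation eq_holds := Defs.eq_holds.
Local Notation ffb := {ffun 'I_N -> bool}.
Implicit Types (z w : param).

Lemma ub_exists (T : finType) (f : T -> R) : exists2 Th, 2 <= Th & forall x, f x <= Th.
Proof.
exists (2 + \sum_x `|f x|).
  by rewrite lerDl sumr_ge0.
move=> x; rewrite (bigD1 x) //= addrCA.
apply: le_trans (ler_norm (f x)) _; rewrite lerDl addr_ge0 // sumr_ge0 //.
Qed.

Lemma lb_exists (T : finType) (f : T -> R) : (forall x, 0 < f x) ->
  exists m, [/\ 0 < m, m <= 1 & forall x, m <= f x].
Proof.
move=> pf.
pose S := \sum_x (f x)^-1.
exists (1 + S)^-1.
have S0 : 0 <= S by apply: sumr_ge0 => e _; rewrite invr_ge0 ltW.
have S1 : 0 < 1 + S by lra.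
split; first by rewrite invr_gt0.
  by rewrite invr_le1 // ?unitfE ?lt0r_neq0 //; lra.
move=> e; rewrite -[f e]invrK lef_pV2 ?posrE ?invr_gt0 //.
have : (f e)^-1 <= S.
  rewrite /S (bigD1 e) //= lerDl.
  by apply: sumr_ge0 => x _; rewrite invr_ge0 ltW.
lra.
Qed.

Definition Tiny (m Th eps : R) z := [/\ pos z, (forall e, m <= pl z e),
  (forall e, pth z e <= Th) & (forall i, pg z i <= eps)].

Lemma Tiny_lt m Th eps z e p : 0 < m -> m <= 1 -> 0 <= eps -> eps * Th < m ^+ N ->
  Tiny m Th eps z -> M (esrc e) <> None -> pg z (esrc e) * pth z e < Lambda_p M z (esrc e) p.
Proof.
move=> m0 m1 e0 eT [pz hm hth hg] hM.
case E: (M (esrc e)) => [t|//].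
apply: lt_le_trans (Lambda_lb wf p E pz m0 m1 hm).
apply: le_lt_trans eT.
have g0 : 0 <= pg z (esrc e) by exact/ltW/((proj2 pz) _).
have t0 : 0 <= pth z e by case: ((proj1 pz) e) => _ [_ /ltW].
by apply: ler_pM => //.
Qed.

Lemma Tiny_noface m Th eps z e p : 0 < m -> m <= 1 -> 0 <= eps -> eps * Th < m ^+ N ->
  Tiny m Th eps z -> pg z (esrc e) * pth z e <> Lambda_p M z (esrc e) p.
Proof.
move=> m0 m1 e0 eT tz E.
have [pz _ _ _] := tz.
case hM: (M (esrc e)) => [t|].
  have hne : M (esrc e) <> None by rewrite hM.
  by have := Tiny_lt p m0 m1 e0 eT tz hne; rewrite E ltxx.
move: E; rewrite Lambda_none // => /eqP; rewrite mulf_eq0 !gt_eqF //.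
  by case: ((proj1 pz) e) => _ [].
exact: (proj2 pz).
Qed.

Lemma Good_Zreg m Th eps z : 0 < m -> m <= 1 -> 0 <= eps -> eps * Th < m ^+ N ->
  Tiny m Th eps z -> distinct z -> Zreg M z.
Proof.
move=> m0 m1 e0 eT tz dz; have [pz _ _ _] := tz.
apply/ZregP; split => // e p _ E.
by apply: (@Tiny_noface m Th eps z e p).
Qed.

Lemma setg_Zreg z i v : Zreg M z -> 0 < v ->
  (forall e p, esrc e = i -> Lambda_p M z i p <> v * pth z e) -> Zreg M (setg z i v).
Proof.
move=> Zz v0 Hv; have [[H1 H2] dz fz] := (ZregP _ z).1 Zz.
apply/ZregP; split.
- split => [f|j]; first by rewrite setg_l setg_u setg_th; apply: H1.
  by rewrite setg_g; case: (j == i).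
- by move=> f f'; rewrite !setg_th; apply: dz.
- move=> f p; have -> : Lambda_p M (setg z i v) (esrc f) p = Lambda_p M z (esrc f) p by apply: Lambda_eq.
  rewrite setg_g setg_th.
  have Hr : Real (setg z i v) f p -> Real z f p by apply: Real_eq.
  move=> /Hr r; case: (eqVneq (esrc f) i) => [efi|nfi].
    by rewrite efi; apply: Hv.
  exact: fz.
Qed.

Lemma gen_eq z w : (forall f, pl w f = pl z f) -> (forall f, pu w f = pu z f) ->
  (forall f, pth w f = pth z f) -> gen M z -> gen M w.
Proof.
move=> hl hu hth gz c; have := gz c; rewrite /condc !hth.
have hL : forall j p, Lambda_p M w j p = Lambda_p M z j p by move=> j p; apply: Lambda_eq.
by rewrite !hL.
Qed.

Definition setgs z (s : seq 'I_N) (v : R) : param := foldr (fun i y => setg y i v) z s.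

Lemma setgs_l z s v f : pl (setgs z s v) f = pl z f.
Proof. by elim: s => //= i s IH; rewrite setg_l. Qed.
Lemma setgs_u z s v f : pu (setgs z s v) f = pu z f.
Proof. by elim: s => //= i s IH; rewrite setg_u. Qed.
Lemma setgs_th z s v f : pth (setgs z s v) f = pth z f.
Proof. by elim: s => //= i s IH; rewrite setg_th. Qed.
Lemma setgs_g z s v j : pg (setgs z s v) j = if j \in s then v else pg z j.
Proof.
elim: s => //= i s IH; rewrite setg_g inE IH.
by case: (j == i).
Qed.

Lemma gammas z s v : Zreg M z -> gen M z -> 0 < v ->
  (forall e p, Lambda_p M z (esrc e) p <> v * pth z e) ->
  reach M z (setgs z s v) /\ Zreg M (setgs z s v).
Proof.
move=> Zz gz v0 Hv; elim: s => [|i s [r Zy]] /=; first by split => //; exact: reach_refl.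
set y := setgs z s v.
have hL : forall j p, Lambda_p M y j p = Lambda_p M z j p.
  by move=> j p; apply: Lambda_eq => f; rewrite ?setgs_l ?setgs_u.
have gy : gen M y by apply: (gen_eq (z := z)) => f; rewrite ?setgs_l ?setgs_u ?setgs_th.
have Hy : forall e p, esrc e = i -> Lambda_p M y i p <> v * pth y e.
  by move=> e p <-; rewrite hL setgs_th.
split; first by apply: reach_trans r _; apply: gamma_move.
exact: setg_Zreg.
Qed.

End Net5.


Section Net6.
Variables (R : realType) (N : nat) (sgn : 'I_N -> 'I_N -> option bool)
  (M : 'I_N -> option (lexpr N)).
Hypothesis wf : wf_network sgn M.
Local Notation param := {ptws pidx sgn -> R}.
Local Notation edge := (edge sgn).
Local Notation edge_of := (edge_of sgn).
Local Notation is_edge := (is_edge sgn).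
Local Notation src_set := (src_set sgn).
Local Notation eq_holds := Defs.eq_holds.
Local Notation ffb := {ffun 'I_N -> bool}.
Implicit Types (z w : param).

Definition mkp (g : 'I_N -> R) (l u th : edge -> R) : param :=
  fun c => match c with
  | inl i => g i
  | inr (f, k) => if val k == 0%N then l f else if val k == 1%N then u f else th f
  end.

Lemma mkp_g g l u th i : pg (mkp g l u th) i = g i. Proof. by []. Qed.
Lemma mkp_l g l u th f : pl (mkp g l u th) f = l f. Proof. by []. Qed.
Lemma mkp_u g l u th f : pu (mkp g l u th) f = u f. Proof. by []. Qed.
Lemma mkp_th g l u th f : pth (mkp g l u th) f = th f. Proof. by []. Qed.

Lemma mkp_ext z g l u th : (forall i, g i = pg z i) -> (forall f, l f = pl z f) ->
  (forall f, u f = pu z f) -> (forall f, th f = pth z f) -> mkp g l u th = z.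
Proof.
move=> hg hl hu hth; apply/funext => -[i|[f k]] /=; first exact: hg.
case: k => -[|[|[|k]]] hk /=.
- by rewrite hl /pl; congr (z (inr (f, _))); apply: val_inj.
- by rewrite hu /pu; congr (z (inr (f, _))); apply: val_inj.
- by rewrite hth /pth; congr (z (inr (f, _))); apply: val_inj.
- by [].
Qed.

Lemma seg_l z w t f : pl (seg z w t) f = pl z f + t * (pl w f - pl z f). Proof. by []. Qed.
Lemma seg_u z w t f : pu (seg z w t) f = pu z f + t * (pu w f - pu z f). Proof. by []. Qed.
Lemma seg_th z w t f : pth (seg z w t) f = pth z f + t * (pth w f - pth z f). Proof. by []. Qed.
Lemma seg_g z w t i : pg (seg z w t) i = pg z i + t * (pg w i - pg z i). Proof. by []. Qed.

Variables (m Th eps : R).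
Hypotheses (m0 : 0 < m) (m1 : m <= 1) (e0 : 0 < eps) (eT : eps * Th < m ^+ N) (Th2 : 2 <= Th)
  (e14 : eps <= 1/4).

Lemma Good_reach z w : (forall t, 0 <= t <= 1 -> Tiny m Th eps (seg z w t) /\ distinct (seg z w t)) ->
  reach M z w.
Proof.
move=> H; apply: seg_reach0 => t ht; have [h1 h2] := H t ht.
by apply: (Good_Zreg wf (m := m) (Th := Th) (eps := eps)) => //; exact: ltW.
Qed.

Definition scale z := mkp (pg z) (pl z) (pu z) (fun f => pth z f / (2 * Th)).

Lemma step_scale z : Tiny m Th eps z -> distinct z ->
  [/\ reach M z (scale z), Tiny m Th eps (scale z), distinct (scale z) &
      forall f, pth (scale z) f < 1].
Proof.
move=> [[H1 H2] hm hth hg] dz.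
have Th2' := Th2; have Th0 : 0 < 2 * Th by lra.
have key : forall t, 0 <= t <= 1 -> Tiny m Th eps (seg z (scale z) t) /\ distinct (seg z (scale z) t).
  move=> t /andP [t0 t1].
  set c := 1 - t + t / (2 * Th).
  have c0 : 0 < c.
    rewrite /c; have : 0 <= t / (2 * Th) by rewrite divr_ge0 // ltW.
    case: (eqVneq t 1) => [->|nt1]; first by rewrite subrr add0r divr_gt0.
    have : t < 1 by rewrite lt_neqAle nt1 t1.
    lra.
  have c1 : c <= 1.
    rewrite /c; have : t / (2 * Th) <= t.
      by rewrite ler_pdivrMr // ler_peMr //; lra.
    lra.
  have Eth : forall f, pth (seg z (scale z) t) f = pth z f * c.
    by move=> f; rewrite seg_th mkp_th /c; field; lra.
  split; last first.
    by move=> f f' s nf; rewrite !Eth => /(mulIf (lt0r_neq0 c0)); apply: dz.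
  split.
  - split => [f|i]; last by rewrite seg_g mkp_g subrr mulr0 addr0.
    rewrite seg_l seg_u mkp_l mkp_u !subrr !mulr0 !addr0 Eth.
    by have [? [? ?]] := H1 f; split => //; split => //; rewrite mulr_gt0.
  - by move=> f; rewrite seg_l mkp_l subrr mulr0 addr0.
  - move=> f; rewrite Eth; apply: le_trans (hth f).
    by rewrite ler_piMr // ltW //; case: (H1 f) => _ [].
  - by move=> i; rewrite seg_g mkp_g subrr mulr0 addr0.
have h01 : ((0 : R) <= 1) && ((1 : R) <= 1) by rewrite ler01 lexx.
have [k1 k2] := key 1 h01; rewrite seg1 in k1 k2.
split => //; first exact: Good_reach.
move=> f; rewrite mkp_th ltr_pdivrMr // mul1r.
apply: le_lt_trans (hth f) _; lra.
Qed.

Definition lam z := mkp (pg z) (fun _ => 1) (fun _ => 2) (pth z).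

Lemma step_lam z : Tiny m Th eps z -> distinct z ->
  [/\ reach M z (lam z), Tiny m Th eps (lam z) & distinct (lam z)].
Proof.
move=> [[H1 H2] hm hth hg] dz.
have m0' := m0; have m1' := m1.
have key : forall t, 0 <= t <= 1 -> Tiny m Th eps (seg z (lam z) t) /\ distinct (seg z (lam z) t).
  move=> t /andP [t0 t1].
  have Eth : forall f, pth (seg z (lam z) t) f = pth z f.
    by move=> f; rewrite seg_th mkp_th subrr mulr0 addr0.
  have Eg : forall i, pg (seg z (lam z) t) i = pg z i.
    by move=> i; rewrite seg_g mkp_g subrr mulr0 addr0.
  have Hl : forall f, m <= pl (seg z (lam z) t) f.
    move=> f; rewrite seg_l mkp_l; have := hm f; nra.
  split; last by move=> f f' s nf; rewrite !Eth; apply: dz.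
  split => //.
  - split => [f|i]; last by rewrite Eg.
    split; first exact: lt_le_trans (Hl f).
    rewrite Eth; split; last by case: (H1 f) => _ [].
    rewrite seg_l seg_u !mkp_l !mkp_u; have [hl0 [hlu _]] := H1 f.
    have h1 : 0 <= (1 - t) * (pu z f - pl z f) by apply: mulr_ge0; rewrite subr_ge0 //; exact: ltW.
    case: (eqVneq t 0) => [->|nt]; first by rewrite !mul0r !addr0.
    have : 0 < t by rewrite lt_neqAle eq_sym nt t0.
    move: h1; move: (pl z f) (pu z f) => a b h1 h2; nra.
  - by move=> f; rewrite Eth.
  - by move=> i; rewrite Eg.
have h01 : ((0 : R) <= 1) && ((1 : R) <= 1) by rewrite ler01 lexx.
have [k1 k2] := key 1 h01; rewrite seg1 in k1 k2.
by split => //; apply: Good_reach.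
Qed.

Definition tg (f : edge) : R := 1 + (val (etgt f))%:R / (N%:R + 1).

Lemma tg_bounds f : 1 <= tg f < 2.
Proof.
have N0 : 0 < N%:R + 1 :> R by rewrite ltr_wpDl // ler0n.
rewrite /tg lerDl divr_ge0 ?ler0n ?ltW //= -[X in _ < X]/(1 + 1) ltrD2l.
rewrite ltr_pdivrMr // mul1r natr1 ltr_nat ltnS.
exact: ltnW (ltn_ord _).
Qed.

Lemma tg_inj f f' : esrc f = esrc f' -> tg f = tg f' -> f = f'.
Proof.
move=> s; rewrite /tg => /addrI.
have N0 : N%:R + 1 != 0 :> R by rewrite gt_eqF // ltr_wpDl // ler0n.
move=> /(mulIf (invr_neq0 N0)) /eqP; rewrite eqr_nat => /eqP h.
by apply: edge_inj => //; apply: val_inj.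
Qed.

Definition zstar : param := mkp (fun _ => 1/4) (fun _ => 1) (fun _ => 2) tg.

Lemma step_gam z : pos z -> (forall f, pl z f = 1) -> (forall f, pu z f = 2) ->
  (forall f, pth z f = tg f) -> (forall i, pg z i <= 1/4) -> reach M z zstar.
Proof.
move=> [H1 H2] hl hu hth hg.
apply: seg_reach0 => t /andP [t0 t1].
have Eth : forall f, pth (seg z zstar t) f = tg f.
  by move=> f; rewrite seg_th mkp_th hth subrr mulr0 addr0.
have El : forall f, pl (seg z zstar t) f = 1.
  by move=> f; rewrite seg_l mkp_l hl subrr mulr0 addr0.
have Eu : forall f, pu (seg z zstar t) f = 2.
  by move=> f; rewrite seg_u mkp_u hu subrr mulr0 addr0.
have Hg : forall i, 0 < pg (seg z zstar t) i /\ pg (seg z zstar t) i <= 1/4.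
  move=> i; rewrite seg_g mkp_g; have := H2 i; have := hg i; nra.
apply: (@Good_Zreg _ _ _ M wf 1 2 (1/4)) => //.
- by rewrite expr1n; lra.
- split.
  + split => [f|i]; last exact: (proj1 (Hg i)).
    rewrite El Eu Eth; have := tg_bounds f; move=> /andP [a b]; split => //; split; lra.
  + by move=> f; rewrite El.
  + by move=> f; rewrite Eth; have /andP [_ /ltW] := tg_bounds f.
  + by move=> i; exact: (proj2 (Hg i)).
- move=> f f' s nf; rewrite !Eth => E; apply: nf; exact: tg_inj.
Qed.

Section Ths.
Variable z3 : param.
Hypotheses (T3 : Tiny m Th eps z3) (D3 : distinct z3) (L3 : forall f, pth z3 f < 1).

Definition ths (s : seq edge) := mkp (pg z3) (pl z3) (pu z3) (fun f => if f \in s then tg f else pth z3 f).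

Lemma ths_good s : Tiny m Th eps (ths s) /\ distinct (ths s).
Proof.
have [[H1 H2] hm hth hg] := T3.
have Th2' := Th2.
split.
- split.
  + split => [f|i]; last by rewrite mkp_g.
    rewrite mkp_l mkp_u mkp_th; have [a [b c]] := H1 f; split => //; split => //.
    case: (f \in s) => //; have /andP [h _] := tg_bounds f; exact: lt_le_trans ltr01 h.
  + by move=> f; rewrite mkp_l.
  + move=> f; rewrite mkp_th; case: (f \in s) => //.
    have /andP [_ h] := tg_bounds f; apply: ltW; exact: lt_le_trans h Th2.
  + by move=> i; rewrite mkp_g.
- move=> f f' sf nf; rewrite !mkp_th.
  case: (boolP (f \in s)) => hf; case: (boolP (f' \in s)) => hf'.
  + by move=> E; apply: nf; apply: tg_inj.
  + move=> E; have := L3 f'; rewrite -E; have /andP [h _] := tg_bounds f.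
    by move=> h'; have := le_lt_trans h h'; rewrite ltxx.
  + move=> E; have := L3 f; rewrite E; have /andP [h _] := tg_bounds f'.
    by move=> h'; have := le_lt_trans h h'; rewrite ltxx.
  + exact: D3.
Qed.

Lemma ths_Zreg s : Zreg M (ths s).
Proof.
have [h1 h2] := ths_good s.
exact: (@Good_Zreg _ _ _ M wf m Th eps _ m0 m1 (ltW e0) eT h1 h2).
Qed.

Lemma ths_step s f : reach M (ths s) (ths (f :: s)).
Proof.
case: (boolP (f \in s)) => fs.
  have -> : ths (f :: s) = ths s.
    rewrite /ths; congr mkp; apply/funext => f'; rewrite inE.
    by case: eqP => // ->; rewrite fs.
  exact: reach_refl.
set y := seg (ths s) (ths (f :: s)).
set a := pth z3 f.
have [[H1 H2] hm hth hg] := T3.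
have [Ts Ds] := ths_good s.
have Th2' := Th2.
have a1 := L3 f.
have a0 : 0 < a by case: (H1 f) => _ [].
have [tg1 tg2] : 1 <= tg f /\ tg f < 2 by apply/andP; exact: tg_bounds.
have tga : 0 < tg f - a by rewrite subr_gt0; exact: lt_le_trans a1 tg1.
have Ethf : forall t, pth (y t) f = a + t * (tg f - a).
  by move=> t; rewrite seg_th !mkp_th inE eqxx (negbTE fs).
have Etho : forall t f', f' != f -> pth (y t) f' = pth (ths s) f'.
  move=> t f' nf; rewrite seg_th !mkp_th inE (negbTE nf) /=.
  by rewrite subrr mulr0 addr0.
have Ethsf : pth (ths s) f = a by rewrite mkp_th (negbTE fs).
have Ty : forall t, 0 <= t <= 1 -> Tiny m Th eps (y t).
  move=> t /andP [t0 t1].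
  have hf0 : 0 < pth (y t) f /\ pth (y t) f <= Th.
    rewrite Ethf; have h1 : 0 <= t * (tg f - a) by rewrite mulr_ge0 // ltW.
    have h2 : t * (tg f - a) <= tg f - a by rewrite ler_piMl // ltW.
    split; lra.
  have [[K1 K2] Km Kth Kg] := Ts.
  split.
  - split => [f'|i]; last by rewrite seg_g !mkp_g subrr mulr0 addr0 H2.
    rewrite seg_l seg_u !mkp_l !mkp_u !subrr !mulr0 !addr0.
    have [a' [b' _]] := H1 f'; split => //; split => //.
    case: (eqVneq f' f) => [->|nf]; first exact: (proj1 hf0).
    by rewrite Etho //; case: (K1 f') => _ [].
  - by move=> f'; rewrite seg_l !mkp_l subrr mulr0 addr0.
  - move=> f'; case: (eqVneq f' f) => [->|nf]; first exact: (proj2 hf0).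
    by rewrite Etho.
  - by move=> i; rewrite seg_g !mkp_g subrr mulr0 addr0.
pose B := [seq (pth (ths s) f' - a) / (tg f - a) | f' <- enum {: edge}].
apply: (@seg_reach _ _ _ M _ _ B); [exact: ths_Zreg|exact: ths_Zreg|].
move=> t ht; have Tyt := Ty t ht.
have [Pyt _ _ _] := Tyt.
case: (pselect (exists f', [/\ esrc f' = esrc f, f' <> f & pth (ths s) f' = a + t * (tg f - a)]))
  => [[f' [sf' nf' Ef']]|nex].
- right; split.
    apply/mapP; exists f'; first by rewrite mem_enum.
    by rewrite Ef'; field; rewrite gt_eqF.
  have tne : etgt f != etgt f'.
    by apply/eqP => E; apply: nf'; apply: esym; apply: edge_inj.
  pose L := if (etgt f < etgt f')%N then EqThTh f f' else EqThTh f' f.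
  have Eyf' : pth (y t) f' = pth (y t) f.
    by rewrite Etho ?Ethf //; apply/eqP.
  split; first exact: pos_Zbar.
  exists L; split.
    rewrite /L; case: ifP => hlt /=.
      by split; [rewrite sf'|split].
    split => //; split => //.
    by rewrite ltn_neqAle eq_sym tne leqNgt hlt.
  move=> b hb; case: (label_cases Pyt hb); last first.
    move=> [g [q [_ [_ E]]]]; exfalso.
    exact: (@Tiny_noface _ _ _ M wf m Th eps _ g q m0 m1 (ltW e0) eT Tyt E).
  move=> [g [g' [-> [sg lt Eg]]]].
  have ngg : g != g' by apply/eqP; exact: etgt_neq lt.
  case: (eqVneq g f) => [gf|ngf].
  + subst g.
    have ng' : g' != f by rewrite eq_sym.
    have : pth (ths s) g' = pth (ths s) f'.
      by rewrite Ef' -Ethf Eg Etho.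
    case: (pselect (g' = f')) => [eg|ngf'] E.
      by rewrite eg in lt *; rewrite /L lt.
    by exfalso; apply: (Ds g' f' _ ngf' E); rewrite -sg sf'.
  + case: (eqVneq g' f) => [g'f|ng'f].
    * subst g'.
      have : pth (ths s) g = pth (ths s) f'.
        by rewrite Ef' -Ethf -Eg Etho.
      case: (pselect (g = f')) => [eg|ngf'] E.
        by rewrite eg in lt *; rewrite /L ltnNge (ltnW lt).
      by exfalso; apply: (Ds g f' _ ngf' E); rewrite sg sf'.
    * exfalso; move: Eg; rewrite !Etho //.
      by apply: Ds => // E; move: ngg; rewrite E eqxx.
- left; apply: (@Good_Zreg _ _ _ M wf m Th eps _ m0 m1 (ltW e0) eT Tyt).
  move=> e e' se ne.
  case: (eqVneq e f) => [ef|nef]; case: (eqVneq e' f) => [e'f|ne'f].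
  + by exfalso; apply: ne; rewrite ef e'f.
  + subst e; rewrite Ethf Etho // => E; apply: nex; exists e'; split => //.
      by apply/eqP.
  + subst e'; rewrite Ethf Etho // => E; apply: nex; exists e; split => //.
  + by rewrite !Etho //; apply: Ds.
Qed.

Lemma ths_all s : reach M (ths [::]) (ths s).
Proof.
elim: s => [|f s IH]; first exact: reach_refl.
exact: reach_trans IH (ths_step s f).
Qed.

End Ths.

Lemma phase2 z : Tiny m Th eps z -> distinct z -> reach M z zstar.
Proof.
move=> tz dz.
have [r1 t3 d3 l3] := step_scale tz dz.
set z3 := scale z in r1 t3 d3 l3.
have e3 : ths z3 [::] = z3 by apply: mkp_ext.
have r2 := ths_all t3 d3 l3 (enum {: edge}).
rewrite e3 in r2.
set y := ths z3 (enum {: edge}) in r2.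
have [ty dy] := ths_good t3 d3 l3 (enum {: edge}).
have [r3 t4 d4] := step_lam ty dy.
apply: reach_trans r1 _; apply: reach_trans r2 _; apply: reach_trans r3 _.
have [P4 _ _ g4] := t4.
apply: step_gam => //.
- by move=> f; rewrite mkp_th /y mkp_th mem_enum.
- move=> i; apply: le_trans (g4 i) _; exact: e14.
Qed.

End Net6.


Section Main.
Variables (R : realType) (N : nat) (sgn : 'I_N -> 'I_N -> option bool)
  (M : 'I_N -> option (lexpr N)).
Hypothesis wf : wf_network sgn M.
Local Notation param := {ptws pidx sgn -> R}.
Local Notation edge := (edge sgn).
Implicit Types (z w : param).

Lemma reach_star z : Zreg M z -> reach M z (@zstar R N sgn).
Proof.
move=> Zz.
have [w1 [Z1 r1 g1 _ _]] := perturb wf Zz.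
have [[H1 H2] d1 f1] := (ZregP M w1).1 Z1.
have [m [m0 m1 hm]] := @lb_exists R _ (fun e => pl w1 e) (fun e => proj1 (H1 e)).
have [Th Th2 hth] := @ub_exists R _ (fun e => pth w1 e).
have Th0 : 0 < 2 * Th by move: Th2 => h; lra.
have mN0 : 0 < m ^+ N by exact: exprn_gt0.
have mN1 : m ^+ N <= 1 by apply: exprn_ile1 => //; exact: ltW.
pose eps := m ^+ N / (2 * Th).
have e0 : 0 < eps by rewrite divr_gt0.
have eT : eps * Th < m ^+ N.
  rewrite /eps mulrAC ltr_pdivrMr // ltr_pM2l //; move: Th2 => h; lra.
have e14 : eps <= 1 / 4.
  rewrite /eps ler_pdivrMr // mul1r; apply: le_trans mN1 _; move: Th2 => h.
  lra.
have Hv : forall e p, Lambda_p M w1 (esrc e) p <> eps * pth w1 e.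
  move=> e p.
  have th0 : 0 < pth w1 e by case: (H1 e) => _ [].
  case E: (M (esrc e)) => [t|].
    have := Lambda_lb wf p E (conj H1 H2) m0 m1 hm => hL.
    have : eps * pth w1 e <= eps * Th by rewrite ler_pM2l.
    move=> h1 h2; move: hL; rewrite h2 => hL.
    by have := lt_le_trans (le_lt_trans h1 eT) hL; rewrite ltxx.
  rewrite Lambda_none // => h; have : 0 < eps * pth w1 e by rewrite mulr_gt0.
  by rewrite -h ltxx.
have [r2 Z2] := gammas (enum 'I_N) Z1 g1 e0 Hv.
set w2 := setgs w1 (enum 'I_N) eps in r2 Z2.
have [P2 d2 _] := (ZregP M w2).1 Z2.
apply: reach_trans r1 _; apply: reach_trans r2 _.
apply: (phase2 wf m0 m1 e0 eT Th2 e14) => //.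
split => //.
- by move=> e; rewrite setgs_l.
- by move=> e; rewrite setgs_th.
- by move=> i; rewrite setgs_g mem_enum.
Qed.

Lemma adj_sym (C1 C2 : set param) : gpg_adj M C1 C2 -> gpg_adj M C2 C1.
Proof. by move=> [v1 [v2 [z [h1 [h2 h3]]]]]; split => //; split => //; exists z. Qed.

Lemma crt_sym (C1 C2 : set param) : clos_refl_trans _ (gpg_adj M) C1 C2 -> clos_refl_trans _ (gpg_adj M) C2 C1.
Proof.
elim=> [x y /adj_sym h|x|x y z _ IH1 _ IH2].
- exact: rt_step.
- exact: rt_refl.
- exact: rt_trans IH2 IH1.
Qed.

Lemma main_connected : gpg_connected R sgn M.
Proof.
move=> C1 C2 [z1 Z1 ->] [z2 Z2 ->].
have r1 := reach_star Z1; have r2 := reach_star Z2.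
exact: rt_trans r1 (crt_sym r2).
Qed.

End Main.

Theorem proposition4p4 (R : realType) (N : nat)
  (sgn : 'I_N -> 'I_N -> option bool) (M : 'I_N -> option (lexpr N)) :
  wf_network sgn M -> gpg_connected R sgn M.
Proof.
move=> wf; exact: (main_connected wf).
Qed.
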